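(* Let $\Bbbk$ be an algebraically closed field of characteristic zero, $G$ a finite group, $\chi:G\to\Bbbk^\times$ a linear character with $\chi^n=1$, $g\in Z(G)$ with $g^n\neq 1$, where $n\geq 2$ is the multiplicative order of $\chi(g)$. Let $H$ be the $\Bbbk$-algebra generated by $\Bbbk G$ and $z$ with relations $z^n=g^n-1$ and $zs=\chi(s)sz$ for $s\in G$. Then for every $j\in\Lambda_1$, the annihilator ideal in $H$ of the $H$-module $P_j$ is $$\Big(\sum_{i\in\Lambda_0}e_i+\sum_{j'\in\Lambda_1\setminus\mathbf{Orb}(j)}e_{j'}\Big).$$
   Context: Let $\chi_0,\dots,\chi_{p-1}$ be the irreducible characters of $G$, $V_i$ a simple $\Bbbk G$-module with character $\chi_i$, and $e_i=\frac{\chi_i(1)}{|G|}\sum_{h\in G}\chi_i(h)h^{-1}$. The central element $g^n$ acts on $V_i$ by a scalar $\lambda_i$; $\Lambda_0=\{i:\lambda_i=1\}$, $\Lambda_1=\{i:\lambda_i\neq 1\}$. The permutation $\tau$ of the indices is defined by $\chi^{-1}\chi_i=\chi_{\tau(i)}$, and $\mathbf{Orb}(j)=\{j,\tau(j),\dots,\tau^{n-1}(j)\}$. For $j\in\Lambda_1$, $P_j=V_j\oplus xV_j\oplus\cdots\oplus x^{n-1}V_j$ (formal copies of $V_j$) with $s\cdot(x^lv)=\chi^{-l}(s)x^l(s\cdot v)$ for $s\in G$, $z\cdot(x^lv)=x^{l+1}v$ for $0\leq l\leq n-2$, and $z\cdot(x^{n-1}v)=(\lambda_j-1)v$. $(a)$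 denotes the two-sided ideal of $H$ generated by $a$. *)

(* Defs.v *)
From HB Require Import structures.
From mathcomp Require Import all_boot all_order all_algebra all_fingroup all_solvable all_field all_character.
Set Implicit Arguments. Unset Strict Implicit. Unset Printing Implicit Defensive.
Import GRing.Theory.
Local Open Scope ring_scope.

(* The group G is the whole carrier [set: gT] of a finite group type gT.
   H is modelled by its PBW basis { s z^a : s in G, 0 <= a < n }:
   an element of H is a function (a, s) |-> coefficient of s z^a. *)

Notation Hel k gT n := {ffun 'I_n * gT -> k}.
Notation Pmod k n j := {ffun 'I_n -> 'cV[k]_(irr_degree j)}.

Section HDefs.
Variables (k : fieldType) (gT : finGroupType) (chi : gT -> k) (g : gT) (n : nat).

Local Notation Hel := {ffun 'I_n * gT -> k}.

(* the basis element s z^m, indexed by a natural number m (used with m < n) *)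
Definition hbasis (m : nat) (s : gT) : Hel :=
  [ffun p : 'I_n * gT => (((p.1 : nat) == m) && (p.2 == s))%:R].

(* product of basis elements (s z^a)(t z^b) in H, computed with the relations
   z t = chi(t) t z and z^n = g^n - 1 *)
Definition bmul (a : nat) (s : gT) (b : nat) (t : gT) : Hel :=
  [ffun r : 'I_n * gT => chi t ^+ a *
    (if (a + b < n)%N then hbasis (a + b)%N (s * t)%g r
     else hbasis (a + b - n)%N (s * t * g ^+ n)%g r - hbasis (a + b - n)%N (s * t)%g r)].

Definition hmul (x y : Hel) : Hel :=
  [ffun r : 'I_n * gT =>
    \sum_(p : 'I_n * gT) \sum_(q : 'I_n * gT) x p * y q * bmul p.1 p.2 q.1 q.2 r].

(* the image in H of the element sum_u f(u) u of kG *)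
Definition gelt (f : gT -> k) : Hel :=
  [ffun p : 'I_n * gT => if (p.1 : nat) == 0%N then f p.2 else 0].

Definition in_ideal (a h : Hel) : Prop :=
  exists (m : nat) (xs ys : 'I_m -> Hel), h = \sum_(i < m) hmul (hmul (xs i) a) (ys i).

Variable sG : irrType k [set: gT].

Definition chr (i : sG) (h : gT) : k := \tr (irr_repr i h).

Definition eidem (i : sG) : Hel :=
  gelt (fun u => (irr_degree i)%:R / (#|[set: gT]|)%:R * chr i (u^-1)%g).

(* i in Lambda_0  <=>  g^n acts on V_i by the scalar 1 *)
Definition Lam0 (i : sG) : bool := irr_repr i (g ^+ n)%g == 1%:M.

(* i in Orb(j)  <=>  chi_i = chi^{-l} chi_j (= chi_{tau^l(j)}) for some 0 <= l < n *)
Definition inOrb (j i : sG) : bool :=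
  [exists l : 'I_n, [forall h : gT, chr i h == (chi h)^-1 ^+ l * chr j h]].

Definition Eidem (j : sG) : Hel :=
  \sum_(i | Lam0 i) eidem i + \sum_(i | ~~ Lam0 i && ~~ inOrb j i) eidem i.

(* P_j = V_j + x V_j + ... + x^{n-1} V_j, V_j = column vectors with the left
   action v |-> irr_repr j s *m v *)
Local Notation Pmod j := {ffun 'I_n -> 'cV[k]_(irr_degree j)}.

Definition Pat (j : sG) (w : Pmod j) (m : nat) : 'cV[k]_(irr_degree j) :=
  if insub m is Some o then w o else 0.

(* z . (x^l v) = x^{l+1} v (l <= n-2),  z . (x^{n-1} v) = (lambda_j - 1) v
   where lambda_j v = g^n . v *)
Definition zact (j : sG) (w : Pmod j) : Pmod j :=
  [ffun l : 'I_n => if (l : nat) == 0%N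
     then irr_repr j (g ^+ n)%g *m Pat w n.-1 - Pat w n.-1
     else Pat w l.-1].

Definition sact (j : sG) (s : gT) (w : Pmod j) : Pmod j :=
  [ffun l : 'I_n => (chi s)^-1 ^+ l *: (irr_repr j s *m w l)].

Definition hact (j : sG) (h : Hel) (w : Pmod j) : Pmod j :=
  \sum_(p : 'I_n * gT) h p *: sact p.2 (iter p.1 (@zact j) w).
End HDefs.

(* Main.v *)
Require Import Defs.
From HB Require Import structures.
From mathcomp Require Import all_boot all_order all_algebra all_fingroup all_solvable all_field all_character.
Import GRing.Theory.
Local Open Scope ring_scope.
Set Warnings "-notation-overridden -ambiguous-paths".
From mathcomp Require Import ring zify.
Set Implicit Arguments. Unset Strict Implicit. Unset Printing Implicit Defensive.
Section RepFacts.
Variables (k : closedFieldType) (hk : [pchar k] =i pred0) (gT : finGroupType)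
  (sG : irrType k [set: gT]).

Local Notation GG := [set: gT]%G.
Local Notation aG := (regular_repr k GG).

Lemma F'G : (([pchar k]^').-group GG)%g.
Proof. apply/pgroupP => p _ _; rewrite !inE /=. have := hk p; rewrite !inE => ->. by []. Qed.

Lemma splitG : group_splitting_field k GG.
Proof. exact: (@group_closure_closed_field k gT GG). Qed.

Lemma natf_neq0 m : (0 < m)%N -> m%:R != 0 :> k.
Proof. by move/GRing.pcharf0P: hk => ->; rewrite -lt0n. Qed.

Lemma regtr x : \tr (aG x) = #|[set: gT]|%:R *+ (x == 1%g).
Proof.
rewrite /mxtrace /=.
have E i : (regular_mx k GG x i i) = ((x == 1%g)%:R).
  rewrite mxE mxE eqxx /= eq_sym.
  have -> : (gring_index GG (enum_val i * x) == i) = (enum_val i * x == enum_val i)%g.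
    apply/eqP/eqP => [H | ->]; last by rewrite gring_valK.
    by rewrite -[in RHS]H gring_indexK ?inE.
  by rewrite -{2}(mulg1 (enum_val i)) (inj_eq (mulgI _)).
rewrite (eq_bigr _ (fun i _ => E i)) sumr_const card_ord.
rewrite /gcard; by case: (x == 1%g); rewrite ?mulr1n ?mulr0n ?mul0rn // ?mul1r.
Qed.


Lemma trR (A : 'M[k]_(gcard GG)) : (A \in group_ring k GG)%MS ->
  \tr A = \sum_(i : sG) \tr (gring_op (irr_repr i) A) *+ irr_degree i.
Proof.
case/envelop_mxP => a ->.
rewrite raddf_sum /=.
under eq_bigr => x _ do rewrite mxtraceZ (mxtrace_regular_pchar sG F'G splitG) ?inE //.
under [RHS]eq_bigr => i _ do rewrite linear_sum raddf_sum /= -sumrMnl.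
rewrite exchange_big /=; apply: eq_bigr => x _; rewrite mulr_sumr; apply: eq_bigr => i _.
by rewrite linearZ /= gring_opG ?inE // mxtraceZ mulrnAr.
Qed.

Definition coef (i : sG) (x : gT) : k :=
  (irr_degree i)%:R / #|[set: gT]|%:R * \tr (irr_repr i x^-1%g).

Lemma cardG_neq0 : #|[set: gT]|%:R != 0 :> k.
Proof. by apply: natf_neq0; apply: (cardG_gt0 GG). Qed.

Lemma Wexp (i : sG) : Wedderburn_id i = \sum_(x in GG) coef i x *: aG x.
Proof.
have /envelop_mxP[a def_e] : (Wedderburn_id i \in group_ring k GG)%MS.
  by move: (Wedderburn_id_mem i); rewrite genmxE mem_sub_gring => /andP[].
rewrite {1}def_e; apply: eq_bigr => x _; congr (_ *: _).
have Gx' : (x^-1)%g \in GG by rewrite inE.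
have T1 : \tr (Wedderburn_id i *m aG x^-1%g) = a x * #|[set: gT]|%:R.
  rewrite def_e mulmx_suml raddf_sum (bigD1 x) ?inE //= big1 ?addr0.
    by rewrite -scalemxAl mxtraceZ -repr_mxM ?inE // mulgV regtr eqxx mulr1n.
  move=> y /andP[_ nyx]; rewrite -scalemxAl mxtraceZ -repr_mxM ?inE // regtr.
  by rewrite -eq_mulgV1 (negbTE nyx) mulr0n mulr0.
have T2 : \tr (Wedderburn_id i *m aG x^-1%g) = \tr (irr_repr i x^-1%g) *+ irr_degree i.
  rewrite trR; last first.
    apply: envelop_mxM; last exact: envelop_mx_id.
    by move: (Wedderburn_id_mem i); rewrite genmxE mem_sub_gring => /andP[].
  rewrite (bigD1 i) //= big1 ?addr0.
    by rewrite gring_opM ?envelop_mx_id // op_Wedderburn_id_pchar ?F'G // mul1mx gring_opG.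
  move=> j nji; rewrite gring_opM ?envelop_mx_id //.
  by rewrite (irr_repr'_op0_pchar F'G _ (Wedderburn_id_mem i)) ?mul0mx ?raddf0 ?mul0rn // eq_sym.
apply: (mulIf cardG_neq0); by rewrite -T1 T2 /coef mulrAC divfK ?cardG_neq0 // mulr_natl.
Qed.

Lemma coef_sum (u : gT) : \sum_(i : sG) coef i u = (u == 1%g)%:R.
Proof.
have := mxtrace_regular_pchar sG F'G splitG (in_setT u^-1%g).
rewrite regtr invg_eq1 => E.
transitivity (#|[set: gT]|%:R^-1 * \sum_(i : sG) \tr (irr_repr i u^-1%g) *+ irr_degree i).
  rewrite mulr_sumr; apply: eq_bigr => i _; rewrite /coef -mulr_natl; ring.
rewrite -E; case: (u == 1%g); rewrite ?mulr1n ?mulr0n ?mulr0 //.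
by rewrite mulVf ?cardG_neq0.
Qed.

End RepFacts.
Section Twist.
Variables (k : closedFieldType) (hk : [pchar k] =i pred0) (gT : finGroupType)
  (sG : irrType k [set: gT]) (chi : gT -> k)
  (chi_morph : forall s t : gT, chi (s * t)%g = chi s * chi t)
  (chi1 : chi 1%g = 1) (chiU : forall s, chi s != 0).

Local Notation GG := [set: gT]%G.

Definition twist (j : sG) (l : nat) (x : gT) : 'M[k]_(irr_degree j) :=
  ((chi x)^-1 ^+ l) *: irr_repr j x.

Lemma twist_repr j l : mx_repr GG (twist j l).
Proof.
split; first by rewrite /twist chi1 invr1 expr1n scale1r repr_mx1.
move=> x y Gx Gy; rewrite /twist repr_mxM // chi_morph invfM exprMn.
by rewrite -scalemxAl -scalemxAr scalerA mulrC.
Qed.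

Definition trep j l := MxRepresentation (twist_repr j l).

Lemma trep_module j l m (U : 'M_(m, irr_degree j)) :
  mxmodule (trep j l) U = mxmodule (irr_repr j) U.
Proof.
rewrite /mxmodule; apply: eq_subset_r => x; rewrite !inE /=.
rewrite /twist -scalemxAr eqmx_scale //.
by rewrite expf_neq0 // invr_neq0.
Qed.

Lemma trep_irr j l : mx_irreducible (trep j l).
Proof.
have [m1 nz minU] := socle_irr j.
split; first by rewrite trep_module.
  exact: nz.
by move=> U; rewrite trep_module; apply: minU.
Qed.

Lemma twist_annihilate (i j : sG) l :
  ~ (forall h, chr i h = (chi h)^-1 ^+ l * chr j h) ->
  \sum_(x in GG) coef i x *: twist j l x = 0.
Proof.
move=> nO.
set i' := irr_comp sG (trep j l).
have rs := rsim_irr_comp_pchar sG (F'G hk gT) (trep_irr j l).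
have ne : i != i'.
  apply/eqP => ei; apply: nO => h.
  rewrite /chr ei -(mxtrace_rsim rs) ?inE //= /twist mxtraceZ.
  by [].
have := irr_comp'_op0_pchar (F'G hk gT) (trep_irr j l) ne (Wedderburn_id_mem i).
rewrite (Wexp hk) linear_sum /= => E; rewrite -[RHS]E; apply: eq_bigr => x _.
rewrite [RHS]linearZ; congr (_ *: _); symmetry; exact: (gring_opG (trep j l) (in_setT x)).
Qed.

End Twist.
Lemma ar1 n a : (a < n)%N -> (0 + n - a.+1 = n.-1 - a)%N.
Proof. rewrite -subn1; lia. Qed.
Lemma ar2 m a : (0 < m)%N -> (m - a.+1 = m.-1 - a)%N.
Proof. rewrite -subn1; lia. Qed.
Lemma ar3 m n a : (0 < m)%N -> (m + n - a.+1 = m.-1 + n - a)%N.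
Proof. rewrite -subn1; lia. Qed.
Lemma ar4 m n : (0 < m)%N -> (m < n)%N -> (m.-1 < n)%N.
Proof. rewrite -subn1; lia. Qed.
Lemma ar5 m a : (0 < m)%N -> (a.+1 <= m)%N = (a <= m.-1)%N.
Proof. rewrite -subn1; lia. Qed.

Lemma sum_pair (V : nmodType) (I J : finType) (F : I * J -> V) :
  \sum_p F p = \sum_(a : I) \sum_(s : J) F (a, s).
Proof. by rewrite pair_bigA; apply: eq_bigr => -[]. Qed.

Lemma src_lt0 n a l : (a < n)%N -> (l < n)%N ->
  ((if (a <= l)%N then (l - a)%N else (l + n - a)%N) < n)%N.
Proof. by move=> ha hl; case: ifP => h; lia. Qed.
Lemma src_inj0 n a b l : (a < n)%N -> (b < n)%N -> (l < n)%N ->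
  (if (a <= l)%N then (l - a)%N else (l + n - a)%N) = (if (b <= l)%N then (l - b)%N else (l + n - b)%N) ->
  a = b.
Proof. by move=> ha hb hl; case: ifP => h1; case: ifP => h2; lia. Qed.

Section Main.
Variables (k : closedFieldType) (hk : [pchar k] =i pred0) (gT : finGroupType)
  (sG : irrType k [set: gT]) (chi : gT -> k)
  (chi_morph : forall s t : gT, chi (s * t)%g = chi s * chi t)
  (n : nat) (chi_n : forall s : gT, chi s ^+ n = 1)
  (g : gT) (g_central : (g \in 'Z([set: gT]))%g)
  (n_ge2 : (2 <= n)%N) (n_order : n.-primitive_root (chi g))
  (j : sG) (hj : ~~ Lam0 g n j).

Local Notation GG := [set: gT]%G.
Local Notation Pm := (Pmod k n j).
Local Notation Z := (@zact k gT g n sG j).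
Local Notation S := (@sact k gT chi n sG j).
Local Notation d := (irr_degree j).

Lemma n_gt0 : (0 < n)%N. Proof. by apply: leq_trans n_ge2. Qed.

Lemma chiU s : chi s != 0.
Proof.
apply/eqP => c0; move: (chi_n s); rewrite c0 expr0n eqn0Ngt n_gt0 /= => /eqP.
by rewrite eq_sym oner_eq0.
Qed.

Lemma chi1 : chi 1%g = 1.
Proof.
by apply: (mulfI (chiU 1%g)); rewrite mulr1 -chi_morph mulg1.
Qed.

Lemma chiX s m : chi (s ^+ m)%g = chi s ^+ m.
Proof. by elim: m => [|m IH]; rewrite ?chi1 // expgS chi_morph IH exprS. Qed.

Lemma chign : chi (g ^+ n)%g = 1.
Proof. by rewrite chiX (prim_expr_order n_order). Qed.

Lemma gnZ : (g ^+ n)%g \in 'Z([set: gT])%g.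
Proof. exact: groupX. Qed.

Definition lam := irr_mode j (g ^+ n)%g.

Lemma rgn : irr_repr j (g ^+ n)%g = lam%:M.
Proof. exact: (irr_center_scalar (@splitG k gT) j gnZ). Qed.

Lemma lam1 : lam - 1 != 0.
Proof. rewrite subr_eq0; apply: contra hj => /eqP e; by rewrite /Lam0 rgn e. Qed.

Lemma PatE (w : Pm) (o : 'I_n) : Pat w o = w o.
Proof. by rewrite /Pat valK. Qed.

Lemma Pat_out (w : Pm) m : (n <= m)%N -> Pat w m = 0.
Proof. by move=> h; rewrite /Pat insubF // ltnNge h. Qed.

Lemma zactE (w : Pm) m : (m < n)%N ->
  Pat (Z w) m = if m == 0%N then (lam - 1) *: Pat w n.-1 else Pat w m.-1.
Proof.
move=> hm; rewrite -[m]/(val (Ordinal hm)) PatE ffunE /=.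
by case: ifP => // _; rewrite rgn mul_scalar_mx scalerBl scale1r.
Qed.

Definition cf a m : k := if (a <= m)%N then 1 else lam - 1.
Definition src a m := if (a <= m)%N then (m - a)%N else (m + n - a)%N.

Lemma iterZ a (w : Pm) m : (a <= n)%N -> (m < n)%N ->
  Pat (iter a Z w) m = cf a m *: Pat w (src a m).
Proof.
elim: a m => [|a IH] m ha hm; first by rewrite /cf /src /= subn0 scale1r.
rewrite /= zactE //; case: eqP => [-> | m0].
  have an : (a <= n.-1)%N by rewrite -ltnS prednK ?n_gt0.
  rewrite IH ?(ltnW ha) ?ltn_predL ?n_gt0 // /cf /src an /= scale1r.
  by rewrite ar1.
have m0' : (0 < m)%N by rewrite lt0n; apply/eqP.
rewrite IH ?(ltnW ha) ?ar4 // /cf /src -ar5 //; case: ifP => h1.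
  by rewrite ar2.
by rewrite ar3.
Qed.

Lemma Pm_eq (w1 w2 : Pm) : (forall m, (m < n)%N -> Pat w1 m = Pat w2 m) -> w1 = w2.
Proof. by move=> H; apply/ffunP => o; rewrite -!PatE H. Qed.

Lemma PatZ c (w : Pm) m : Pat (c *: w) m = c *: Pat w m.
Proof. by rewrite /Pat; case: insubP => [o _ _|_]; rewrite ?ffunE ?scaler0. Qed.

Lemma PatD (w1 w2 : Pm) m : Pat (w1 + w2) m = Pat w1 m + Pat w2 m.
Proof. by rewrite /Pat; case: insubP => [o _ _|_]; rewrite ?ffunE ?addr0. Qed.

Lemma Pat0 m : Pat (0 : Pm) m = 0.
Proof. by rewrite /Pat; case: insubP => [o _ _|_]; rewrite ?ffunE. Qed.

Lemma PatS s (w : Pm) m : Pat (S s w) m = (chi s)^-1 ^+ m *: (irr_repr j s *m Pat w m).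
Proof. by rewrite /Pat; case: insubP => [o _ <-|_]; rewrite ?ffunE ?mulmx0 ?scaler0. Qed.

Lemma chinv1 t : (chi t)^-1 ^+ n.-1 = chi t.
Proof.
apply: (mulIf (invr_neq0 (chiU t))); rewrite -exprSr prednK ?n_gt0 //.
by rewrite exprVn chi_n invr1 mulfV ?chiU.
Qed.

Lemma ZS t (w : Pm) : Z (S t w) = chi t *: S t (Z w).
Proof.
apply: Pm_eq => m hm; rewrite PatZ !PatS zactE // zactE //.
case: eqP => [-> | m0].
  by rewrite !PatS expr0 !scale1r chinv1 -!scalemxAr !scalerA mulrC.
have m0' : (0 < m)%N by rewrite lt0n; apply/eqP.
rewrite scalerA PatS; congr (_ *: _).
by rewrite -{2}(prednK m0') exprS mulrA mulfV ?chiU // mul1r.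
Qed.


Lemma SS s t (w : Pm) : S s (S t w) = S (s * t)%g w.
Proof.
apply: Pm_eq => m hm; rewrite !PatS -scalemxAr scalerA mulmxA -repr_mxM ?inE //.
by rewrite chi_morph invfM exprMn mulrC.
Qed.

Lemma SD s (w1 w2 : Pm) : S s (w1 + w2) = S s w1 + S s w2.
Proof. by apply: Pm_eq => m hm; rewrite PatD !PatS PatD mulmxDr scalerDr. Qed.

Lemma SZ s c (w : Pm) : S s (c *: w) = c *: S s w.
Proof. by apply: Pm_eq => m hm; rewrite PatZ !PatS PatZ -scalemxAr !scalerA mulrC. Qed.

Lemma S0 s : S s 0 = 0.
Proof. by apply: Pm_eq => m hm; rewrite PatS Pat0 mulmx0 scaler0. Qed.
Lemma ZD (w1 w2 : Pm) : Z (w1 + w2) = Z w1 + Z w2.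
Proof. apply: Pm_eq => m hm; rewrite PatD !zactE //; case: ifP => _; by rewrite PatD ?scalerDr. Qed.

Lemma ZZ c (w : Pm) : Z (c *: w) = c *: Z w.
Proof.
apply: Pm_eq => m hm; rewrite PatZ !zactE //; case: ifP => _; rewrite PatZ //.
by rewrite !scalerA mulrC.
Qed.

Lemma Z0 : Z 0 = 0.
Proof. by apply: Pm_eq => m hm; rewrite zactE // !Pat0; case: ifP; rewrite ?scaler0. Qed.

Lemma iZ0 a : iter a Z 0 = 0.
Proof. by elim: a => //= a ->; exact: Z0. Qed.

Lemma iZD a (w1 w2 : Pm) : iter a Z (w1 + w2) = iter a Z w1 + iter a Z w2.
Proof. by elim: a => //= a ->; rewrite ZD. Qed.

Lemma iZZ a c (w : Pm) : iter a Z (c *: w) = c *: iter a Z w.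
Proof. by elim: a => //= a ->; rewrite ZZ. Qed.

Lemma iZS a t (w : Pm) : iter a Z (S t w) = chi t ^+ a *: S t (iter a Z w).
Proof. by elim: a => [|a IH] /=; rewrite ?scale1r // IH ZZ ZS scalerA exprSr. Qed.
Lemma iZn (w : Pm) : iter n Z w = (lam - 1) *: w.
Proof.
apply: Pm_eq => m hm; rewrite iterZ // PatZ /cf /src leqNgt hm /=.
by rewrite addnK.
Qed.

Lemma Sgn u (w : Pm) : S (u * g ^+ n)%g w = lam *: S u w.
Proof.
apply: Pm_eq => m hm; rewrite PatZ !PatS chi_morph chign mulr1 repr_mxM ?inE //.
by rewrite rgn mul_mx_scalar -scalemxAl !scalerA mulrC.
Qed.
Local Notation Hl := (Hel k gT n).
Local Notation hact := (@hact k gT chi g n sG j).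

Definition B (p : 'I_n * gT) (w : Pm) := S p.2 (iter p.1 Z w).

Lemma BD p (w1 w2 : Pm) : B p (w1 + w2) = B p w1 + B p w2.
Proof. by rewrite /B iZD SD. Qed.
Lemma BZ p c (w : Pm) : B p (c *: w) = c *: B p w.
Proof. by rewrite /B iZZ SZ. Qed.
Lemma B0 p : B p 0 = 0.
Proof. by rewrite /B iZ0 S0. Qed.
Lemma Bsum p I r (P : pred I) (F : I -> Pm) :
  B p (\sum_(i <- r | P i) F i) = \sum_(i <- r | P i) B p (F i).
Proof. exact: (big_morph _ (BD p) (B0 p)). Qed.

Lemma hactE (h : Hl) (w : Pm) : hact h w = \sum_p h p *: B p w.
Proof. by []. Qed.

Lemma hactD (h1 h2 : Hl) (w : Pm) : hact (h1 + h2) w = hact h1 w + hact h2 w.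
Proof. by rewrite !hactE -big_split; apply: eq_bigr => p _; rewrite ffunE scalerDl. Qed.

Lemma hactZ (c : k) (h : Hl) (w : Pm) : hact [ffun r => c * h r] w = c *: hact h w.
Proof. by rewrite !hactE scaler_sumr; apply: eq_bigr => p _; rewrite ffunE scalerA. Qed.

Lemma hact0 (w : Pm) : hact 0 w = 0.
Proof. by rewrite hactE big1 // => p _; rewrite ffunE scale0r. Qed.

Lemma hactN (h : Hl) (w : Pm) : hact (- h) w = - hact h w.
Proof. by rewrite !hactE -sumrN; apply: eq_bigr => p _; rewrite ffunE scaleNr. Qed.

Lemma hact_sum I r (P : pred I) (F : I -> Hl) w :
  hact (\sum_(i <- r | P i) F i) w = \sum_(i <- r | P i) hact (F i) w.
Proof. exact: (big_morph (fun h => hact h w) (fun h1 h2 => hactD h1 h2 w) (hact0 w)). Qed.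

Lemma hact_basis m u w (hm : (m < n)%N) : hact (hbasis k n m u) w = B (Ordinal hm, u) w.
Proof.
rewrite hactE (bigD1 (Ordinal hm, u)) //= big1 ?addr0.
  by rewrite ffunE /= !eqxx scale1r.
move=> [a s] /= ne; rewrite ffunE /=.
case: eqP => [ea|]; last by rewrite scale0r.
case: eqP => [es|]; last by rewrite scale0r.
by case/eqP: ne; congr (_, _) => //; apply: val_inj.
Qed.
Lemma hact_bmul (a b : 'I_n) s t w :
  hact (bmul chi g n a s b t) w = B (a, s) (B (b, t) w).
Proof.
have eb : bmul chi g n a s b t = [ffun r => chi t ^+ a * (if (a + b < n)%N then hbasis k n (a + b) (s * t)%g
   else hbasis k n (a + b - n) (s * t * g ^+ n)%g - hbasis k n (a + b - n) (s * t)%g) r].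
  by apply/ffunP => r; rewrite !ffunE; case: ifP => _; rewrite ?ffunE.
rewrite eb hactZ /B /= iZS SZ SS -iterD; congr (_ *: _).
case: ifP => hab; first by rewrite hact_basis /B.
have nab : (n <= a + b)%N by rewrite leqNgt hab.
have hm : (a + b - n < n)%N.
  by move: (ltn_ord a) (ltn_ord b) nab; clear; lia.
rewrite hactD hactN !(hact_basis _ _ hm) /B /= Sgn.
rewrite -[in RHS](subnK nab) iterD iZn iZZ SZ scalerBl scale1r.
by [].
Qed.
Lemma hact_mul (x y : Hl) w : hact (hmul chi g x y) w = hact x (hact y w).
Proof.
transitivity (\sum_p \sum_q (x p * y q) *: hact (bmul chi g n p.1 p.2 q.1 q.2) w).
  rewrite hactE; under eq_bigr => r _ do rewrite ffunE scaler_suml.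
  rewrite exchange_big; apply: eq_bigr => p _.
  under eq_bigr => r _ do rewrite scaler_suml.
  rewrite exchange_big; apply: eq_bigr => q _.
  by rewrite hactE scaler_sumr; apply: eq_bigr => r _; rewrite scalerA.
rewrite [RHS]hactE; apply: eq_bigr => p _.
rewrite hactE Bsum scaler_sumr; apply: eq_bigr => q _.
by rewrite hact_bmul BZ scalerA; case: p; case: q.
Qed.

Lemma hact_w0 (h : Hl) : hact h 0 = 0.
Proof. by rewrite hactE big1 // => p _; rewrite B0 scaler0. Qed.
Lemma Pat_sum I r (P : pred I) (F : I -> Pm) m :
  Pat (\sum_(i <- r | P i) F i) m = \sum_(i <- r | P i) Pat (F i) m.
Proof. exact: (big_morph (fun w => Pat w m) (fun w1 w2 => PatD w1 w2 m) (Pat0 m)). Qed.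

Lemma Pat_gelt f w m : (m < n)%N ->
  Pat (hact (gelt n f) w) m = (\sum_s f s *: twist chi j m s) *m Pat w m.
Proof.
move=> hm; rewrite hactE sum_pair (bigD1 (Ordinal n_gt0)) //= [X in _ + X]big1 ?addr0.
  rewrite Pat_sum mulmx_suml; apply: eq_bigr => s _.
  by rewrite ffunE /= PatZ /B /= PatS /twist !scalemxAl.
move=> a na; apply: big1 => s _; rewrite ffunE /=.
suff -> : (a == 0 :> nat) = false by rewrite scale0r.
by apply/negbTE; apply: contra na => /eqP a0; apply/eqP/val_inj.
Qed.
Lemma orb_notLam0 i : inOrb chi n j i -> ~~ Lam0 g n i.
Proof.
case/existsP => l /forallP H; apply/negP => /eqP Li.
have e1 := eqP (H 1%g); have e2 := eqP (H (g ^+ n)%g).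
rewrite /chr !repr_mx1 chi1 invr1 expr1n mul1r !mxtrace1 in e1.
rewrite /chr Li rgn chign invr1 expr1n mul1r mxtrace1 mxtrace_scalar in e2.
have nz : (irr_degree i)%:R != 0 :> k by apply: natf_neq0 hk _ (irr_degree_gt0 i).
have l1 : lam = 1.
  by apply: (mulIf nz); rewrite mul1r {1}e1 mulr_natr -e2.
by move: hj; rewrite /Lam0 rgn l1 eqxx.
Qed.

Lemma hact_eidem i w : ~~ inOrb chi n j i -> hact (eidem n i) w = 0.
Proof.
move=> nO; apply: Pm_eq => m hm; rewrite Pat_gelt // Pat0.
have nO' : ~ (forall h, chr i h = (chi h)^-1 ^+ m * chr j h).
  move=> H; move/negP: nO; apply; apply/existsP; exists (Ordinal hm).
  by apply/forallP => h; apply/eqP; apply: H.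
have := twist_annihilate hk chi_morph chi1 chiU nO'.
rewrite (eq_bigl xpredT) ?mul0mx; last by move=> x; rewrite inE.
move=> E; apply: (etrans _ (mul0mx _ (Pat w m))); congr (_ *m _); exact: E.
Qed.

Lemma hact_Eidem w : hact (Eidem chi g n j) w = 0.
Proof.
rewrite /Eidem hactD !hact_sum !big1 ?addr0 // => i.
  by case/andP => _; apply: hact_eidem.
by move=> Li; apply: hact_eidem; apply: contraL Li; apply: orb_notLam0.
Qed.
Lemma ideal_ann (h : Hl) : in_ideal chi g (Eidem chi g n j) h -> forall w, hact h w = 0.
Proof.
case=> m [xs [ys ->]] w; rewrite hact_sum big1 // => i _.
by rewrite !hact_mul hact_Eidem hact_w0.
Qed.

Lemma bmul0 s (b : 'I_n) t r : bmul chi g n 0 s b t r = ((r.1 == b :> nat) && (r.2 == s * t)%g)%:R.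
Proof. by rewrite ffunE expr0 mul1r add0n ltn_ord ffunE. Qed.

Lemma hmul_gelt f (y : Hl) :
  hmul chi g (gelt n f) y = [ffun r => \sum_s f s * y (r.1, (s^-1 * r.2)%g)].
Proof.
apply/ffunP => r; rewrite !ffunE sum_pair (bigD1 (Ordinal n_gt0)) //= [X in _ + X]big1 ?addr0.
  apply: eq_bigr => s _; rewrite ffunE /=.
  rewrite (bigD1 (r.1, (s^-1 * r.2)%g)) //= [X in _ + X]big1 ?addr0.
    by rewrite bmul0 /= eqxx mulKVg eqxx mulr1.
  move=> [b t] /= nq; rewrite bmul0 /=.
  case: eqP => [eb|]; last by rewrite mulr0.
  case: eqP => [et|]; last by rewrite mulr0.
  case/eqP: nq; congr (_, _); first by apply: val_inj.
  by rewrite et mulKg.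
move=> a na; apply: big1 => s _; apply: big1 => q _; rewrite ffunE /=.
suff -> : (a == 0 :> nat) = false by rewrite !mul0r.
by apply/negbTE; apply: contra na => /eqP a0; apply/eqP/val_inj.
Qed.

Definition Ef (u : gT) : k := \sum_(i | ~~ inOrb chi n j i) coef i u.

Lemma Eidem_gelt : Eidem chi g n j = gelt n Ef.
Proof.
apply/ffunP => r; rewrite /Eidem !ffunE !sum_ffunE.
case: eqP => r0.
  rewrite /Ef [RHS](bigID (fun i => Lam0 g n i)) /=; congr (_ + _).
    apply: eq_big => i; last by rewrite ffunE r0 eqxx.
    apply/idP/andP => [L|[]//]; split => //.
    exact: (contraL (@orb_notLam0 i)) L.
  apply: eq_big => i; first by rewrite andbC.
  by rewrite ffunE r0 eqxx.
by rewrite !big1 ?addr0 // => i _; rewrite ffunE; case: eqP.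
Qed.

Lemma conv_E f : (forall l : 'I_n, \sum_s f s *: twist chi j l s = 0) ->
  forall u, \sum_s f s * Ef (s^-1 * u)%g = f u.
Proof.
move=> Hf u.
have E x : Ef x = (x == 1%g)%:R - \sum_(i | inOrb chi n j i) coef i x.
  by rewrite -(coef_sum hk sG) (bigID (inOrb chi n j)) /= addrC addrK.
under eq_bigr => s _ do rewrite E mulrBr.
rewrite sumrB.
have -> : \sum_s f s * ((s^-1 * u)%g == 1%g)%:R = f u.
  rewrite (bigD1 u) //= mulVg eqxx mulr1 big1 ?addr0 // => s nsu.
  by rewrite -eq_invg_mul invgK (negbTE nsu) mulr0.
rewrite [X in _ - X](_ : _ = 0) ?subr0 //.
under eq_bigr => s _ do rewrite mulr_sumr.
rewrite exchange_big /= big1 // => i /existsP[l /forallP H].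
transitivity ((irr_degree i)%:R / #|[set: gT]|%:R *
    \tr (twist chi j l (u^-1)%g *m \sum_s f s *: twist chi j l s)); last first.
  by rewrite Hf mulmx0 mxtrace0 mulr0.
rewrite mulmx_sumr raddf_sum mulr_sumr; apply: eq_bigr => s _.
rewrite /= -scalemxAr mxtraceZ -(twist_repr chi_morph chi1 j l).2 ?inE //.
rewrite /coef invMg invgK /twist mxtraceZ.
have := eqP (H (u^-1 * s)%g); rewrite /chr => ->.
by rewrite mulrCA.
Qed.

Lemma cf_neq0 a l : cf a l != 0.
Proof. by rewrite /cf; case: ifP => _; rewrite ?oner_neq0 ?lam1. Qed.

Lemma extract (h : Hl) : (forall w, hact h w = 0) ->
  forall a l : 'I_n, \sum_s h (a, s) *: twist chi j l s = 0.
Proof.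
move=> H a l.
set T := \sum_s _.
suff Tv : forall v : 'cV[k]_d, T *m v = 0.
  apply/matrixP => r c; have := Tv (delta_mx c 0); rewrite -colE => /matrixP/(_ r 0).
  by rewrite !mxE.
move=> v.
pose q := src a l.
have hq : (q < n)%N by apply: src_lt0.
pose w : Pm := [ffun t : 'I_n => if (t : nat) == q then v else 0].
have Pw m : Pat w m = if m == q then v else 0.
  case: (ltnP m n) => hm.
    by rewrite -[m]/(val (Ordinal hm)) PatE ffunE.
  rewrite Pat_out //; case: eqP => // mq.
  by move: hq; rewrite -mq ltnNge hm.
clearbody w.
have := congr1 (fun w => Pat w l) (H w).
rewrite /= Pat0 hactE Pat_sum sum_pair (bigD1 a) //= [X in _ + X]big1 ?addr0.
  under eq_bigr => s _ do rewrite PatZ /B PatS (@iterZ a w l (ltnW (ltn_ord a)) (ltn_ord l)) Pw eqxx.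
  move=> E; suff : cf a l *: (T *m v) = 0.
    by move/eqP; rewrite scaler_eq0 (negbTE (cf_neq0 a l)) /= => /eqP.
  apply: (etrans _ E); rewrite /T mulmx_suml scaler_sumr; apply: eq_bigr => s _.
  rewrite /twist -!scalemxAl -!scalemxAr !scalerA; congr (_ *: _).
  by rewrite /=; ring.
move=> b nba; apply: big1 => s _.
rewrite PatZ /B PatS (@iterZ b w l (ltnW (ltn_ord b)) (ltn_ord l)) Pw.
have -> : (src b l == q) = false.
  apply/negbTE; apply: contra nba => /eqP e.
  by apply/eqP/val_inj; apply: (src_inj0 (ltn_ord b) (ltn_ord a) (ltn_ord l)).
by rewrite scaler0 mulmx0 !scaler0.
Qed.

Lemma ann_ideal (h : Hl) : (forall w, hact h w = 0) -> in_ideal chi g (Eidem chi g n j) h.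
Proof.
move=> H; have X := extract H.
exists n, (fun a => gelt n (fun s => h (a, s))), (fun a : 'I_n => hbasis k n a 1%g).
rewrite Eidem_gelt.
have G a : hmul chi g (gelt n (fun s => h (a, s))) (gelt n Ef) = gelt n (fun s => h (a, s)).
  rewrite hmul_gelt; apply/ffunP => r; rewrite !ffunE.
  under eq_bigr => s _ do rewrite ffunE /=.
  case: eqP => _; first exact: (conv_E (X a) r.2).
  by rewrite big1 // => s _; rewrite mulr0.
under eq_bigr => a _ do rewrite G hmul_gelt.
apply/ffunP => -[b u]; rewrite sum_ffunE (bigD1 b) //= [X in _ + X]big1 ?addr0.
  rewrite ffunE (bigD1 u) //= [X in _ + X]big1 ?addr0.
    by rewrite ffunE /= eqxx mulVg eqxx mulr1.
  move=> s nsu; rewrite ffunE /= eqxx /=.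
  by rewrite -eq_invg_mul invgK (negbTE nsu) mulr0.
move=> a nab; rewrite ffunE big1 // => s _; rewrite ffunE /=.
suff -> : (b == a :> nat) = false by rewrite mulr0.
by apply/negbTE; apply: contra nab => /eqP e; apply/eqP/val_inj.
Qed.

End Main.

Theorem theorem4p4
  (k : closedFieldType) (hk : [pchar k] =i pred0)
  (gT : finGroupType) (sG : irrType k [set: gT])
  (chi : gT -> k)
  (chi_morph : forall s t : gT, chi (s * t)%g = chi s * chi t)
  (n : nat) (chi_n : forall s : gT, chi s ^+ n = 1)
  (g : gT) (g_central : (g \in 'Z([set: gT]))%g)
  (g_n : (g ^+ n)%g != 1%g)
  (n_ge2 : (2 <= n)%N) (n_order : n.-primitive_root (chi g)) :
  forall j : sG, ~~ Lam0 g n j ->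
  forall h : Hel k gT n,
    (forall w : Pmod k n j, hact chi g h w = 0) <->
    in_ideal chi g (Eidem chi g n j) h.
Proof.
move=> j hj h; split.
  exact: (ann_ideal hk chi_morph chi_n g_central n_ge2 n_order hj).
exact: (ideal_ann hk chi_morph chi_n g_central n_ge2 n_order hj).
Qed.
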